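(* Let $\theta>2$, let $G=(\mu,\mathcal{V},\mathcal{W},\mathcal{E})$ be a $\theta$-maximal, non-trivial weighted bipartite graph, and let $w_0\in\mathcal{W}$. There exists a subgraph $G'=(\mu,\mathcal{V}',\mathcal{W}',\mathcal{E}')$ of $G$ such that: (a) $(v,w_0)\in \mathcal{E}'$ for all $v\in\mathcal{V}'$; (b) for all $w\in\mathcal{W}'$, there exists $v\in\mathcal{V}'$ such that $(v,w)\in\mathcal{E}'$; (c) $\mu^{(\theta)}(G)\le (1-1/\theta)^{-\theta} \mu^{(\theta-1)}(G')$.
   Context: A weighted bipartite graph is $G=(\mu,\mathcal{V},\mathcal{W},\mathcal{E})$ with $\mu:\mathbb{R}_{>0}\to\mathbb{R}_{>0}$, $\mathcal{V},\mathcal{W}$ finite sets of positive reals, $\mathcal{E}\subseteq\mathcal{V}\times\mathcal{W}$; it is non-trivial if $\mathcal{E}\ne\emptyset$. $\mu(\mathcal{T})=\sum_{t\in\mathcal{T}}\mu(t)$ and $\mu(\mathcal{E})=\sum_{(v,w)\in\mathcal{E}}\mu(v)\mu(w)$. Edge density $\delta(G)=\mu(\mathcal{E})/(\mu(\mathcal{V})\mu(\mathcal{W}))$ if $\mathcal{E}\ne\emptyset$, else $0$. For $\theta\ge1$, $\mu^{(\theta)}(G)=\delta(G)^\theta\mu(\mathcal{V})\mu(\mathcal{W})$. A subgraph of $G$ is $(\mu,\mathcal{V}',\mathcal{W}',\mathcal{E}')$ with $\mathcal{V}'\subseteq\mathcal{V}$, $\mathcal{W}'\subseteq\mathcal{W}$,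 $\mathcal{E}'\subseteq\mathcal{E}\cap(\mathcal{V}'\times\mathcal{W}')$. $G$ is $\theta$-maximal if $\mu^{(\theta)}(G)\ge\mu^{(\theta)}(G')$ for every subgraph $G'$. *)

(* Defs.v *)
From HB Require Import structures.
From mathcomp Require Import all_boot all_order all_algebra.
From mathcomp Require Import finmap.
From mathcomp Require Import all_classical all_reals.
From mathcomp Require Import exp.
Set Implicit Arguments. Unset Strict Implicit. Unset Printing Implicit Defensive.
Import Order.TTheory GRing.Theory Num.Theory.
Local Open Scope ring_scope.
Local Open Scope fset_scope.

Record wbgraph (R : realType) := WBGraph {
  wb_mu : R -> R;
  wb_V : {fset R};
  wb_W : {fset R};
  wb_E : {fset R * R}
}.

Definition wb_wf (R : realType) (G : wbgraph R) : Prop :=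
  (forall x : R, 0 < x -> 0 < wb_mu G x) /\
  (forall v, v \in wb_V G -> 0 < v) /\
  (forall w, w \in wb_W G -> 0 < w) /\
  (forall e, e \in wb_E G -> (e.1 \in wb_V G) && (e.2 \in wb_W G)).

Definition nontrivial (R : realType) (G : wbgraph R) : Prop := wb_E G != fset0.

Definition mu_set (R : realType) (mu : R -> R) (T : {fset R}) : R :=
  \sum_(t <- T) mu t.

Definition mu_edges (R : realType) (mu : R -> R) (E : {fset R * R}) : R :=
  \sum_(e <- E) mu e.1 * mu e.2.

Definition edge_density (R : realType) (G : wbgraph R) : R :=
  if wb_E G == fset0 then 0
  else mu_edges (wb_mu G) (wb_E G) /
       (mu_set (wb_mu G) (wb_V G) * mu_set (wb_mu G) (wb_W G)).

Definition mu_theta (R : realType) (theta : R) (G : wbgraph R) : R :=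
  powR (edge_density G) theta * mu_set (wb_mu G) (wb_V G)
    * mu_set (wb_mu G) (wb_W G).

Definition subgraph (R : realType) (G' G : wbgraph R) : Prop :=
  wb_mu G' = wb_mu G /\
  wb_V G' `<=` wb_V G /\
  wb_W G' `<=` wb_W G /\
  (forall e, e \in wb_E G' ->
     [&& e \in wb_E G, e.1 \in wb_V G' & e.2 \in wb_W G']).

Definition theta_maximal (R : realType) (theta : R) (G : wbgraph R) : Prop :=
  forall G' : wbgraph R, subgraph G' G -> mu_theta theta G' <= mu_theta theta G.

(* Main.v *)
Require Import Defs.
From HB Require Import structures.
From mathcomp Require Import all_boot all_order all_algebra.
From mathcomp Require Import finmap.
From mathcomp Require Import all_classical all_reals.
From mathcomp Require Import exp.
From mathcomp Require Import ring lra.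
Set Implicit Arguments. Unset Strict Implicit. Unset Printing Implicit Defensive.
Import Order.TTheory GRing.Theory Num.Theory.
Local Open Scope ring_scope.
Section Analytic.
Variable R : realType.

Lemma young1 (c z : R) : 0 < c < 1 -> 0 <= z -> powR z c <= c * z + (1 - c).
Proof.
move=> /andP[c0 c1] z0.
have q0 : 0 < (1 - c)^-1 by rewrite invr_gt0 subr_gt0.
have p0 : 0 < c^-1 by rewrite invr_gt0.
have := @conjugate_powR R (powR z c) 1 (c^-1) ((1 - c)^-1) (powR_ge0 _ _) ler01 p0 q0.
rewrite !invrK => /(_ ltac:(by rewrite addrC subrK)).
rewrite mulr1 -powRrM mulfV ?gt_eqF // powRr1 // powR1 ?invrK.
by rewrite mul1r mulrC.
Qed.

Lemma core (th x y : R) : 1 < th -> 0 <= x < 1 -> 0 <= y < 1 ->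
  powR ((1 - y) / (1 - x)) th * (1 - x) <= 1 -> (1 - 1 / th) * x <= y.
Proof.
move=> th1 /andP[x0 x1] /andP[y0 y1] H.
have th0 : 0 < th by exact: lt_trans ltr01 th1.
have x1' : 0 < 1 - x by rewrite subr_gt0.
have y1' : 0 < 1 - y by rewrite subr_gt0.
set q := (1 - y) / (1 - x) in H.
have q0 : 0 <= q by rewrite divr_ge0 // ltW.
have H1 : powR q th <= powR (1 - x) (-1).
  rewrite powR_inv1; last exact: ltW x1'.
  by rewrite -div1r ler_pdivlMr.
have H2 : q <= powR (1 - x) (- (1 / th)).
  have := @ge0_ler_powR R (1 / th) ltac:(by rewrite divr_ge0 // ltW) (q `^ th) ((1 - x) `^ (-1))
    ltac:(by rewrite nnegrE; apply: powR_ge0) ltac:(by rewrite nnegrE; apply: powR_ge0) H1.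
  rewrite /= -!powRrM mulN1r mul1r mulfV ?gt_eqF // powRr1 //.
have H3 : 1 - y <= powR (1 - x) (1 - 1 / th).
  have -> : 1 - y = q * (1 - x) by rewrite /q divfK //; exact: lt0r_neq0 x1'.
  have -> : 1 - 1 / th = - (1 / th) + 1 by rewrite addrC.
  rewrite powRD; last by apply/implyP => _; exact: lt0r_neq0 x1'.
  rewrite powRr1; last exact: ltW x1'.
  by rewrite ler_pM2r.
have c01 : 0 < 1 - 1 / th < 1.
  apply/andP; split; last by rewrite gtrBl divr_gt0.
  by rewrite subr_gt0 ltr_pdivrMr // mul1r.
have := @young1 _ (1 - x) c01 (ltW x1').
move: H3; set P := powR _ _; set c := 1 - 1 / th.
move=> H3 H4. nra.
Qed.
End Analytic.
Section Key.
Variable R : realType.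
Lemma key (th a b e m t : R) : 1 < th -> 0 < a -> 0 < m <= b -> 0 <= t <= e -> 0 < e ->
  (t < e -> 0 < b - m) ->
  powR ((e - t) / (a * (b - m))) th * a * (b - m) <= powR (e / (a * b)) th * a * b ->
  (1 - 1 / th) * e * m <= t * b.
Proof.
move=> th1 a0 /andP[m0 mb] /andP[t0 te] e0 hbm H.
have th0 : 0 < th by exact: lt_trans ltr01 th1.
have b0 : 0 < b by exact: lt_le_trans m0 mb.
have c1 : 1 - 1 / th <= 1 by rewrite gerBl divr_ge0 // ltW.
have c0 : 0 <= 1 - 1 / th by rewrite subr_ge0 ler_pdivrMr // mul1r ltW.
have [tee|tle] := eqVneq t e.
  rewrite tee.
  have em : e * m <= e * b by rewrite ler_pM2l.
  have em0 : 0 <= e * m by rewrite mulr_ge0 // ltW.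
  rewrite -mulrA; apply: le_trans em.
  by rewrite ler_piMl.
have lt : t < e by rewrite lt_neqAle tle te.
have bm := hbm lt.
set x := m / b; set y := t / e.
have x0 : 0 <= x < 1.
  by rewrite divr_ge0 ?ltW //= /x ltr_pdivrMr // mul1r -subr_gt0.
have y0 : 0 <= y < 1.
  by rewrite divr_ge0 //= ?(ltW e0) // /y ltr_pdivrMr // mul1r.
have hq : (e - t) / (a * (b - m)) = e / (a * b) * ((1 - y) / (1 - x)).
  rewrite /x /y; field.
  by rewrite !gt_eqF // ?subr_gt0 // ?mulr_gt0 // ?subr_gt0 //; lra.
have hd : 0 <= e / (a * b) by rewrite divr_ge0 ?ltW // mulr_gt0.
have hq0 : 0 <= (1 - y) / (1 - x).
  by case/andP: x0 => ? ?; case/andP: y0 => ? ?; rewrite divr_ge0 // subr_ge0 ltW.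
rewrite hq powRM // in H.
have Pd : 0 < powR (e / (a * b)) th by rewrite powR_gt0 // divr_gt0 // mulr_gt0.
have H' : powR ((1 - y) / (1 - x)) th * (1 - x) <= 1.
  move: H; set P1 := powR (e / _) th; set P2 := powR _ th.
  have -> : 1 - x = (b - m) / b by rewrite /x; field; rewrite gt_eqF.
  rewrite mulrA ler_pdivrMr // mul1r.
  move=> H.
  have Pa : 0 < P1 * a by rewrite mulr_gt0.
  rewrite -(ler_pM2l Pa).
  have -> : P1 * a * (P2 * (b - m)) = P1 * P2 * a * (b - m) by ring.
  exact: H.
have hc := @core R th x y th1 x0 y0 H'.
have eb : 0 < e * b by rewrite mulr_gt0.
have := hc; rewrite -(ler_pM2r eb) /x /y.
have -> : (1 - 1 / th) * (m / b) * (e * b) = (1 - 1 / th) * e * m.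
  by field; rewrite !gt_eqF.
by have -> : t / e * (e * b) = t * b by field; rewrite !gt_eqF.
Qed.
End Key.
Section Final.
Variable R : realType.
Lemma final (th c a b e a' b' e' : R) : 2 < th -> 0 < c -> 0 < a -> 0 < b -> 0 < e ->
  0 < a' -> 0 < b' -> b' <= b ->
  c * e <= a' * b -> c * e * a' <= e' * a ->
  powR (e / (a * b)) th * a * b <=
  powR c (- th) * (powR (e' / (a' * b')) (th - 1) * a' * b').
Proof.
move=> th2 cpos a0 b0 e0 a'0 b'0 bb h1 h2.
have th0 : 0 < th by lra.
have th1 : 1 < th by lra.
have e'0 : 0 < e'.
  have : 0 < e' * a by apply: lt_le_trans h2; rewrite !mulr_gt0.
  by rewrite pmulr_lgt0.
have [d dE] : exists d, d = e / (a * b) by eexists.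
have [d' d'E] : exists d, d = e' / (a' * b') by eexists.
rewrite -dE -d'E.
have d0 : 0 < d by rewrite dE divr_gt0 // mulr_gt0.
have d'0 : 0 < d' by rewrite d'E divr_gt0 // mulr_gt0.
have hd2 : c * d * b <= d' * b'.
  have -> : c * d * b = c * e / a by rewrite dE; field; rewrite !gt_eqF.
  have -> : d' * b' = e' / a' by rewrite d'E; field; rewrite !gt_eqF.
  by rewrite ler_pdivrMr // mulrAC ler_pdivlMr.
have hd1 : c * d <= d'.
  have : c * d * b' <= d' * b'.
    apply: le_trans hd2; rewrite ler_pM2l // mulr_gt0 //.
  by rewrite ler_pM2r.
have A1 : powR (c * d) (th - 2) <= powR d' (th - 2).
  apply: (@ge0_ler_powR R (th - 2)) => //; first by lra.
  - by rewrite nnegrE; exact: ltW (mulr_gt0 cpos d0).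
  - by rewrite nnegrE; exact: ltW d'0.
have P0 u : 0 <= powR u (th - 2) by apply: powR_ge0.
have split : powR d' (th - 1) * a' * b' = powR d' (th - 2) * (d' * b') * a'.
  have -> : th - 1 = (th - 2) + 1 by ring.
  rewrite powRD ?powRr1 ?ltW //; last by apply/implyP => _; rewrite gt_eqF.
  ring.
have cda : c * d * a * b <= a' * b.
  by have -> : c * d * a * b = c * e by rewrite dE; field; rewrite !gt_eqF.
have S1 : powR (c * d) (th - 2) * (c * d * b) * a' <= powR d' (th - 1) * a' * b'.
  rewrite split ler_pM2r //.
  apply: ler_pM => //; exact: ltW (mulr_gt0 (mulr_gt0 cpos d0) b0).
have S2 : powR (c * d) (th - 2) * (c * d) * (c * d) * a * b
          <= powR (c * d) (th - 2) * (c * d * b) * a'.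
  have -> : powR (c * d) (th - 2) * (c * d) * (c * d) * a * b =
            powR (c * d) (th - 2) * (c * d) * (c * d * a * b) by ring.
  have -> : powR (c * d) (th - 2) * (c * d * b) * a' =
            powR (c * d) (th - 2) * (c * d) * (a' * b) by ring.
  by apply: ler_pM => //; rewrite ?mulr_ge0 ?powR_ge0 // ?ltW.
have S3 : powR (c * d) (th - 2) * (c * d) * (c * d) = powR c th * powR d th.
  have cd0 : 0 <= c * d by rewrite mulr_ge0 ?ltW.
  have E1 : c * d * powR (c * d) (th - 2) = powR (c * d) (th - 1).
    have -> : th - 2 = (th - 1) - 1 by ring.
    by rewrite mulr_powRB1 //; lra.
  have E2 : c * d * powR (c * d) (th - 1) = powR (c * d) th.
    by rewrite mulr_powRB1 //; lra.
  have -> : powR (c * d) (th - 2) * (c * d) * (c * d) =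
            c * d * (c * d * powR (c * d) (th - 2)) by ring.
  by rewrite E1 E2 powRM ?ltW.
have S4 : powR c (- th) * powR c th = 1.
  by rewrite powRN mulVf // gt_eqF // powR_gt0.
rewrite -[X in X <= _]mul1r -{1}S4 -mulrA.
apply: (le_trans _ (ler_wpM2l (powR_ge0 c (- th)) S1)).
apply: ler_wpM2l; first exact: powR_ge0.
apply: le_trans S2.
by rewrite S3 !mulrA.
Qed.
End Final.
Section Comb.
Variable R : realType.
Implicit Types (mu : R -> R).

Lemma sum_pred1 (T : eqType) (s : seq T) (x : T) (F : T -> R) : uniq s ->
  \sum_(y <- s | y == x) F y = if x \in s then F x else 0.
Proof.
move=> us; case: ifP => xs.
  rewrite -big_filter (_ : [seq y <- s | y == x] = [:: x]) ?big_seq1 //.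
  exact: filter_pred1_uniq.
rewrite big_seq_cond big1 // => y /andP[ys /eqP yx].
by rewrite -yx ys in xs.
Qed.

Lemma sum_ge1 (T : choiceType) (A : {fset T}) (x : T) (F : T -> R) :
  x \in A -> (forall y, y \in A -> 0 <= F y) -> F x <= \sum_(y <- A) F y.
Proof.
move=> xA F0; rewrite (big_fsetD1 _ xA) /= lerDl.
by rewrite big_seq sumr_ge0 // => y; rewrite in_fsetD1 => /andP[_ /F0].
Qed.

Lemma sum_ge0f (T : choiceType) (A : {fset T}) (P : pred T) (F : T -> R) :
  (forall y, y \in A -> 0 <= F y) -> 0 <= \sum_(y <- A | P y) F y.
Proof. by move=> F0; rewrite big_seq_cond sumr_ge0 // => y /andP[/F0]. Qed.

Lemma edge_densityE (G : wbgraph R) : edge_density G =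
  mu_edges (wb_mu G) (wb_E G) / (mu_set (wb_mu G) (wb_V G) * mu_set (wb_mu G) (wb_W G)).
Proof.
rewrite /edge_density; case: ifP => // /eqP ->.
by rewrite /mu_edges big_seq_fset0 mul0r.
Qed.

Lemma mu_thetaE th (G : wbgraph R) : mu_theta th G =
  powR (mu_edges (wb_mu G) (wb_E G) / (mu_set (wb_mu G) (wb_V G) * mu_set (wb_mu G) (wb_W G))) th
  * mu_set (wb_mu G) (wb_V G) * mu_set (wb_mu G) (wb_W G).
Proof. by rewrite /mu_theta edge_densityE. Qed.

Lemma side mu (p q : R * R -> R) (A B : {fset R}) (E : {fset R * R}) (x : R) th :
  1 < th -> x \in B ->
  (forall y, 0 < y -> 0 < mu y) ->
  (forall y, y \in A -> 0 < y) -> (forall y, y \in B -> 0 < y) ->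
  (forall e, e \in E -> (p e \in A) && (q e \in B)) ->
  E != fset0 ->
  powR ((\sum_(e <- [fset e in E | q e != x]%fset) mu (p e) * mu (q e)) /
        (mu_set mu A * mu_set mu (B `\ x)%fset)) th * mu_set mu A * mu_set mu (B `\ x)%fset
  <= powR ((\sum_(e <- E) mu (p e) * mu (q e)) / (mu_set mu A * mu_set mu B)) th
       * mu_set mu A * mu_set mu B ->
  (1 - 1 / th) * (\sum_(e <- E) mu (p e) * mu (q e))
    <= (\sum_(e <- E | q e == x) mu (p e)) * mu_set mu B.
Proof.
move=> th1 xB mu0 A0 B0 EAB En H.
set F := fun e => mu (p e) * mu (q e).
have F0 : forall e, e \in E -> 0 < F e.
  by move=> e /EAB /andP[/A0 pa /B0 qb]; rewrite /F mulr_gt0 // mu0.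
have [e0 e0E] := fset0Pn _ En.
have a0 : 0 < mu_set mu A.
  have /andP[pa _] := EAB _ e0E.
  rewrite /mu_set; apply: (lt_le_trans _ (sum_ge1 (F := mu) pa _)); first exact: mu0 (A0 _ pa).
  by move=> y /A0 /mu0 /ltW.
have e0' : 0 < \sum_(e <- E) F e.
  apply: (lt_le_trans _ (sum_ge1 (F := F) e0E _)); first exact: F0.
  by move=> y /F0 /ltW.
have m0 : 0 < mu x by apply: mu0; apply: B0.
have mb : mu x <= mu_set mu B by apply: sum_ge1 => // y /B0 /mu0 /ltW.
have bD : mu_set mu (B `\ x)%fset = mu_set mu B - mu x.
  by rewrite /mu_set (big_fsetD1 _ xB) /=; ring.
have tE : \sum_(e <- E | q e == x) F e = mu x * \sum_(e <- E | q e == x) mu (p e).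
  by rewrite mulr_sumr; apply: eq_bigr => e /eqP qe; rewrite /F qe mulrC.
have eD : \sum_(e <- [fset e in E | q e != x]%fset) F e =
          \sum_(e <- E) F e - mu x * \sum_(e <- E | q e == x) mu (p e).
  rewrite -big_fset_condE -tE [in RHS](bigID (fun e => q e == x)) /=.
  ring.
have t0 : 0 <= mu x * \sum_(e <- E | q e == x) mu (p e).
  by rewrite -tE; apply: sum_ge0f => y /F0 /ltW.
have te : mu x * \sum_(e <- E | q e == x) mu (p e) <= \sum_(e <- E) F e.
  rewrite -subr_ge0 -eD; apply: sum_ge0f => y.
  by rewrite !inE => /andP[/F0 /ltW].
have hbm : mu x * \sum_(e <- E | q e == x) mu (p e) < \sum_(e <- E) F e ->
           0 < mu_set mu B - mu x.
  rewrite -subr_gt0 -eD -bD => hpos.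
  have : [fset e in E | q e != x]%fset != fset0.
    apply/negP => /eqP h; move: hpos; rewrite h big_seq_fset0 ltxx //.
  case/fset0Pn => e1; rewrite !inE => /andP[e1E qx].
  have /andP[_ qB] := EAB _ e1E.
  have qB' : q e1 \in (B `\ x)%fset by rewrite in_fsetD1 qx.
  rewrite /mu_set; apply: (lt_le_trans _ (sum_ge1 (F := mu) qB' _)); first exact: (mu0 _ (B0 _ qB)).
  by move=> y; rewrite in_fsetD1 => /andP[_ /B0 /mu0 /ltW].
rewrite bD eD in H.
have := key th1 a0 (introT andP (conj m0 mb)) (introT andP (conj t0 te)) e0' hbm H.
move=> hk.
rewrite -(ler_pM2r m0).
by move: hk; rewrite -/F; congr (_ <= _); ring.
Qed.
End Comb.
Section Main.
Variable R : realType.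

Lemma sum_sub (T : choiceType) (A B : {fset T}) (F : T -> R) :
  (A `<=` B)%fset -> (forall y, y \in B -> 0 <= F y) ->
  \sum_(y <- A) F y <= \sum_(y <- B) F y.
Proof.
move=> AB F0; rewrite [X in _ <= X](big_fsetID _ (fun x => x \in A)) /=.
rewrite -[X in X <= _]addr0 lerD //.
  rewrite le_eqVlt; apply/orP; left; apply/eqP; apply: eq_fbigl => x.
  rewrite !inE /=; case xA: (x \in A); rewrite ?andbF ?andbT //.
  by rewrite (fsubsetP AB).
by rewrite big_seq sumr_ge0 // => y; rewrite !inE => /andP[/F0].
Qed.

Lemma main (theta : R) (G : wbgraph R) (w0 : R) :
  2 < theta ->
  wb_wf G -> nontrivial G -> theta_maximal theta G ->
  w0 \in wb_W G ->
  exists G' : wbgraph R,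
    subgraph G' G /\
    (forall v, v \in wb_V G' -> (v, w0) \in wb_E G') /\
    (forall w, w \in wb_W G' -> exists2 v, v \in wb_V G' & (v, w) \in wb_E G') /\
    mu_theta theta G <=
      powR (1 - 1 / theta) (- theta) * mu_theta (theta - 1) G'.
Proof.
case: G => mu V W E th2 [/= mu0 [V0 [W0 EVW]]] nt hmax w0W /=.
rewrite /nontrivial /= in nt.
have th1 : 1 < theta by lra.
have th0 : 0 < theta by lra.
set c := 1 - 1 / theta.
have cpos : 0 < c by rewrite /c subr_gt0 ltr_pdivrMr // mul1r.
have HW : c * mu_edges mu E <= (\sum_(e <- E | e.2 == w0) mu e.1) * mu_set mu W.
  apply: (@side R mu fst snd V W E w0 theta th1 w0W mu0 V0 W0 EVW nt).
  have := hmax (WBGraph mu V (W `\ w0)%fset [fset e in E | e.2 != w0]%fset).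
  rewrite !mu_thetaE /=; apply.
  split => //; split; first exact: fsubset_refl.
  split; first exact: fsubD1set.
  move=> e; rewrite !inE /= => /andP[eE ew].
  by have /andP[-> ->] := EVW _ eE; rewrite eE ew.
have sC : forall E' : {fset R * R},
    \sum_(e <- E') mu e.2 * mu e.1 = \sum_(e <- E') mu e.1 * mu e.2.
  by move=> E'; apply: eq_bigr => e _; rewrite mulrC.
have EWV : forall e, e \in E -> (e.2 \in W) && (e.1 \in V).
  by move=> e /EVW /andP[-> ->].
have HV : forall v, v \in V ->
    c * mu_edges mu E <= (\sum_(e <- E | e.1 == v) mu e.2) * mu_set mu V.
  move=> v vV.
  have := @side R mu snd fst W V E v theta th1 vV mu0 W0 V0 EWV nt.
  rewrite /mu_edges !sC; apply.
  have := hmax (WBGraph mu (V `\ v)%fset W [fset e in E | e.1 != v]%fset).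
  rewrite !mu_thetaE /= /mu_edges.
  rewrite [mu_set mu (V `\ v)%fset * mu_set mu W]mulrC [mu_set mu V * mu_set mu W]mulrC.
  rewrite [_ * mu_set mu (V `\ v)%fset * mu_set mu W]mulrAC [_ * mu_set mu V * mu_set mu W]mulrAC.
  apply.
  split => //; split; first exact: fsubD1set.
  split; first exact: fsubset_refl.
  move=> e; rewrite !inE /= => /andP[eE ev].
  by have /andP[-> ->] := EVW _ eE; rewrite eE ev.
pose V' := [fset v in V | (v, w0) \in E]%fset.
pose W' := [fset w in W | has (fun v => (v, w) \in E) V']%fset.
pose E' := [fset e in E | e.1 \in V']%fset.
have F1 : mu_set mu V' = \sum_(e <- E | e.2 == w0) mu e.1.
  rewrite /mu_set /V' -big_fset_condE big_mkcond /=.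
  transitivity (\sum_(e <- E | e.2 == w0) \sum_(v <- V | v == e.1) mu v); last first.
    rewrite big_seq_cond [RHS]big_seq_cond; apply: eq_bigr => e /andP[eE _].
    rewrite sum_pred1 ?fset_uniq //.
    by have /andP[-> _] := EVW _ eE.
  rewrite (exchange_big_dep (fun=> true)) //=.
  apply: eq_bigr => v _.
  rewrite (eq_bigl (fun e => e == (v, w0))); last first.
    by case=> a b /=; rewrite xpair_eqE andbC eq_sym.
  by rewrite sum_pred1 ?fset_uniq.
have F2 : mu_edges mu E' = \sum_(v <- V') mu v * \sum_(e <- E | e.1 == v) mu e.2.
  transitivity (\sum_(v <- V') \sum_(e <- E | e.1 == v) mu e.1 * mu e.2); last first.
    apply: eq_bigr => v _; rewrite mulr_sumr; apply: eq_bigr => e /eqP ->; done.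
  rewrite (exchange_big_dep (fun=> true)) //=.
  rewrite /mu_edges /E' -big_fset_condE big_mkcond /=.
  apply: eq_bigr => e _.
  rewrite (eq_bigl (fun v => v == e.1)); last by move=> v; rewrite eq_sym.
  by rewrite sum_pred1 ?fset_uniq.
have [e1 e1E] := fset0Pn _ nt.
have e0 : 0 < mu_edges mu E.
  have /andP[e1V e1W] := EVW _ e1E.
  rewrite /mu_edges; apply: (lt_le_trans _ (sum_ge1 (F := fun e => mu e.1 * mu e.2) e1E _)).
    exact: mulr_gt0 (mu0 _ (V0 _ e1V)) (mu0 _ (W0 _ e1W)).
  move=> y /EVW /andP[yV yW].
  exact: ltW (mulr_gt0 (mu0 _ (V0 _ yV)) (mu0 _ (W0 _ yW))).
have b0 : 0 < mu_set mu W.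
  apply: (lt_le_trans _ (sum_ge1 (F := mu) w0W _)); first exact: mu0 _ (W0 _ w0W).
  by move=> y /W0 /mu0 /ltW.
have a'0 : 0 < mu_set mu V'.
  have : 0 < mu_set mu V' * mu_set mu W.
    by apply: lt_le_trans (mulr_gt0 cpos e0) _; rewrite F1.
  by rewrite pmulr_lgt0.
have [v1 v1V'] : exists v, v \in V'.
  apply/fset0Pn; apply/negP => /eqP h; move: a'0.
  by rewrite h /mu_set big_seq_fset0 ltxx.
have v1V : v1 \in V by move: v1V'; rewrite !inE => /andP[].
have a0 : 0 < mu_set mu V.
  apply: (lt_le_trans _ (sum_ge1 (F := mu) v1V _)); first exact: mu0 _ (V0 _ v1V).
  by move=> y /V0 /mu0 /ltW.
have w0W' : w0 \in W'.
  by rewrite !inE w0W /=; apply/hasP; exists v1 => //; move: v1V'; rewrite !inE => /andP[].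
have b'0 : 0 < mu_set mu W'.
  apply: (lt_le_trans _ (sum_ge1 (F := mu) w0W' _)); first exact: mu0 _ (W0 _ w0W).
  by move=> y; rewrite !inE => /andP[/W0 /mu0 /ltW].
have b'b : mu_set mu W' <= mu_set mu W.
  apply: sum_sub; last by move=> y /W0 /mu0 /ltW.
  by apply/fsubsetP => y; rewrite !inE => /andP[].
have h1 : c * mu_edges mu E <= mu_set mu V' * mu_set mu W by rewrite F1.
have h2 : c * mu_edges mu E * mu_set mu V' <= mu_edges mu E' * mu_set mu V.
  rewrite F2 mulr_suml mulr_sumr big_seq [X in _ <= X]big_seq.
  apply: ler_sum => v vV'.
  have vV : v \in V by move: vV'; rewrite !inE => /andP[].
  have := HV v vV => hv.
  have mv : 0 < mu v by exact: mu0 _ (V0 _ vV).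
  by rewrite [X in X <= _]mulrC -mulrA ler_pM2l.
exists (WBGraph mu V' W' E'); split.
  split => //; split.
    by apply/fsubsetP => y; rewrite !inE => /andP[].
  split; first by apply/fsubsetP => y; rewrite !inE => /andP[].
  case=> x y /=; rewrite !inE /= => /andP[xyE xV'].
  rewrite xyE xV' /=.
  have /andP[_ yW] := EVW _ xyE.
  apply/andP; split; first exact: yW.
  apply/hasP; exists x; last exact: xyE.
  by rewrite !inE /=.
split.
  move=> v /= vV'; rewrite !inE /=.
  by have := vV'; rewrite !inE => /andP[-> ->].
split.
  move=> w /=; rewrite !inE => /andP[wW /hasP[v vV' vwE]].
  exists v => //; rewrite !inE /= vwE /=.
  by have := vV'; rewrite !inE => /andP[-> ->].
rewrite !mu_thetaE /=.
exact: final th2 cpos a0 b0 e0 a'0 b'0 b'b h1 h2.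
Qed.
End Main.

Local Open Scope fset_scope.

Theorem lemma5p10 (R : realType) (theta : R) (G : wbgraph R) (w0 : R) :
  2 < theta ->
  wb_wf G -> nontrivial G -> theta_maximal theta G ->
  w0 \in wb_W G ->
  exists G' : wbgraph R,
    subgraph G' G /\
    (forall v, v \in wb_V G' -> (v, w0) \in wb_E G') /\
    (forall w, w \in wb_W G' -> exists2 v, v \in wb_V G' & (v, w) \in wb_E G') /\
    mu_theta theta G <=
      powR (1 - 1 / theta) (- theta) * mu_theta (theta - 1) G'.
Proof. exact: main. Qed.
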